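(* Let $S$ be the free semigroup on countably many generators, enumerated as $\vec{s}=(s_n)_{n\in\omega}$. Every very strongly productive ultrafilter on $S$ is multiplicatively isomorphic to an ordered union ultrafilter, and hence is sparse.
   Context: For a sequence $\vec{x}=(x_n)_{n\in\omega}$ in $S$, $\mathrm{FP}(\vec{x})$ is the set of products $\prod_{i\in a}x_i$ (increasing order of indices), $a$ a finite nonempty subset of $\omega$. A sequence $\vec{y}$ is a product subsystem of $\vec{x}$ if there are finite nonempty $a_n\subseteq\omega$ with $\max a_n<\min a_{n+1}$ and $y_n=\prod_{i\in a_n}x_i$ for all $n$. An ultrafilter $p$ on $S$ is very strongly productive if every $A\in p$ contains some $\mathrm{FP}(\vec{x})\in p$ with $\vec{x}$ a product subsystem of $\vec{s}$. $\mathbb{F}$ is the partial semigroup of finite nonempty subsets of $\omega$ with $ab=a\cup b$ defined iff $\max a<\min b$; an ordered union ultrafilter is an ultrafilter $\mathcal{U}$ on $\mathbb{F}$ such that every member contains some $\mathrm{FP}(\vec{b})\in\mathcal{U}$ for a sequence $\vec{b}$ in $\mathbb{F}$ with $\max b_i<\min b_{i+1}$. $p$ is multiplicatively isomorphic to an ordered union ultrafilter if for some sequence $\vec{x}$ in $S$ the map $f:\mathbb{F}\to\mathrm{FP}(\vec{x})$, $f(a)=\prod_{i\in a}x_i$, is injective and $\{f^{-1}[A]:A\in p\}$ is an ordered union ultrafilter. $p$ is sparse if for every $A\in p$ there are a sequence $\vec{x}$ in $S$ and a subsequence $\vec{y}=(x_{k_n})_n$ ($k_0<k_1<\cdots$)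 with $\mathrm{FP}(\vec{y})\in p$, $\mathrm{FP}(\vec{x})\subseteq A$, and $\{k_n:n\in\omega\}$ coinfinite in $\omega$. *)

(* Defs.v *)
From Stdlib Require Import Arith List.
Import ListNotations.

(** The free semigroup on countably many generators: nonempty words over nat,
    a word being stored as (first letter, remaining letters). *)
Record FreeSg := mkS { shd : nat; stl : list nat }.

Definition mulS (u v : FreeSg) : FreeSg := mkS (shd u) (stl u ++ shd v :: stl v).

Definition gen (n : nat) : FreeSg := mkS n [].

(** Finite nonempty subsets of omega, as strictly increasing nonempty lists
    (min element, then the rest in increasing order). *)
Fixpoint sortedb (i : nat) (l : list nat) : bool :=
  match l with
  | [] => true
  | j :: l' => (i <? j) && sortedb j l'
  end.

Record Fin := mkFin { fmin : nat; frest : list nat;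
                      fsorted : sortedb fmin frest = true }.

Definition fin_list (a : Fin) : list nat := fmin a :: frest a.
Definition fmax (a : Fin) : nat := last (fin_list a) 0.

Fixpoint prodS (x : nat -> FreeSg) (i : nat) (l : list nat) : FreeSg :=
  match l with
  | [] => x i
  | j :: l' => mulS (x i) (prodS x j l')
  end.

Definition prodF (x : nat -> FreeSg) (a : Fin) : FreeSg := prodS x (fmin a) (frest a).

Definition FP (x : nat -> FreeSg) : FreeSg -> Prop := fun y => exists a : Fin, y = prodF x a.

Definition product_subsystem (x y : nat -> FreeSg) : Prop :=
  exists a : nat -> Fin,
    (forall n, fmax (a n) < fmin (a (S n))) /\ (forall n, y n = prodF x (a n)).

Definition ultrafilter {X : Type} (U : (X -> Prop) -> Prop) : Prop :=
  U (fun _ => True) /\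
  ~ U (fun _ => False) /\
  (forall A B : X -> Prop, U A -> (forall z, A z -> B z) -> U B) /\
  (forall A B : X -> Prop, U A -> U B -> U (fun z => A z /\ B z)) /\
  (forall A : X -> Prop, U A \/ U (fun z => ~ A z)).

Definition subset {X : Type} (A B : X -> Prop) : Prop := forall z, A z -> B z.

Definition very_strongly_productive (p : (FreeSg -> Prop) -> Prop) : Prop :=
  ultrafilter p /\
  forall A, p A -> exists x : nat -> FreeSg,
    product_subsystem gen x /\ p (FP x) /\ subset (FP x) A.

(** FP(b) in the partial semigroup F: products (= ordered unions, i.e.
    concatenations of the increasing lists) of b_i over finite nonempty c. *)
Definition FPF (b : nat -> Fin) : Fin -> Prop :=
  fun a => exists c : Fin,
    fin_list a = concat (map (fun i => fin_list (b i)) (fin_list c)).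

Definition ordered_union_ultrafilter (U : (Fin -> Prop) -> Prop) : Prop :=
  ultrafilter U /\
  forall A, U A -> exists b : nat -> Fin,
    (forall n, fmax (b n) < fmin (b (S n))) /\ U (FPF b) /\ subset (FPF b) A.

Definition mult_iso_ordered_union (p : (FreeSg -> Prop) -> Prop) : Prop :=
  exists x : nat -> FreeSg,
    (forall a b : Fin, prodF x a = prodF x b -> a = b) /\
    ordered_union_ultrafilter
      (fun B : Fin -> Prop =>
         exists A, p A /\ forall a : Fin, B a <-> A (prodF x a)).

Definition sparse (p : (FreeSg -> Prop) -> Prop) : Prop :=
  forall A, p A -> exists (x : nat -> FreeSg) (k : nat -> nat),
    (forall n, k n < k (S n)) /\
    p (FP (fun n => x (k n))) /\
    subset (FP x) A /\
    (forall m, exists n, m <= n /\ forall i, k i <> n).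

(* Main.v *)
Require Import Defs.
From Stdlib Require Import Arith List Lia Bool Eqdep_dec ClassicalEpsilon.
Import ListNotations.

Definition wl (w : FreeSg) : list nat := shd w :: stl w.
Arguments wl : simpl never.

Lemma wl_mul u v : wl (mulS u v) = wl u ++ wl v.
Proof. destruct u, v; reflexivity. Qed.

Lemma wl_inj u v : wl u = wl v -> u = v.
Proof. destruct u, v; unfold wl; simpl; intros H; inversion H; subst; reflexivity. Qed.

Lemma wl_prodS x i l : wl (prodS x i l) = concat (map (fun k => wl (x k)) (i :: l)).
Proof.
  revert i; induction l as [|j l IH]; intros i.
  - simpl. rewrite app_nil_r; reflexivity.
  - change (prodS x i (j :: l)) with (mulS (x i) (prodS x j l)).
    rewrite wl_mul, IH. reflexivity.
Qed.

Lemma wl_prodF x a : wl (prodF x a) = concat (map (fun k => wl (x k)) (fin_list a)).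
Proof. apply wl_prodS. Qed.

Lemma prodS_gen i l : prodS gen i l = mkS i l.
Proof.
  revert i; induction l as [|j l IH]; intros i; [reflexivity|].
  change (prodS gen i (j :: l)) with (mulS (gen i) (prodS gen j l)).
  rewrite IH. reflexivity.
Qed.

Lemma wl_prodF_gen a : wl (prodF gen a) = fin_list a.
Proof. unfold prodF. rewrite prodS_gen. reflexivity. Qed.

Lemma prodS_ext f g i l : (forall n, f n = g n) -> prodS f i l = prodS g i l.
Proof.
  intros H; revert i; induction l as [|j l IH]; intros i; simpl; rewrite H; [reflexivity|].
  rewrite IH; reflexivity.
Qed.

Lemma FP_ext f g : (forall n, f n = g n) -> forall w, FP f w -> FP g w.
Proof.
  intros H w [a Ha]. exists a. rewrite Ha. unfold prodF. apply prodS_ext; auto.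
Qed.

Lemma sortedb_app i l j m :
  sortedb i (l ++ j :: m) = true <->
  sortedb i l = true /\ last (i :: l) 0 < j /\ sortedb j m = true.
Proof.
  revert i; induction l as [|k l IH]; intros i; simpl.
  - rewrite andb_true_iff, Nat.ltb_lt. intuition.
  - rewrite !andb_true_iff, Nat.ltb_lt, IH.
    intuition.
Qed.

Lemma sortedb_le_last i l : sortedb i l = true -> forall y, In y (i :: l) -> y <= last (i :: l) 0.
Proof.
  revert i; induction l as [|k l IH]; intros i Hs y Hy.
  - destruct Hy as [<-|[]]; simpl; lia.
  - simpl in Hs. apply andb_true_iff in Hs as [H1 H2]. apply Nat.ltb_lt in H1.
    assert (last (i :: k :: l) 0 = last (k :: l) 0) as -> by reflexivity.
    destruct Hy as [<-|Hy].
    + specialize (IH k H2 k (or_introl eq_refl)). lia.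
    + apply IH; auto.
Qed.

Lemma In_last i l : In (last (i :: l) 0) (i :: l).
Proof.
  revert i; induction l as [|k l IH]; intros i; [left; reflexivity|].
  assert (last (i :: k :: l) 0 = last (k :: l) 0) as -> by reflexivity.
  right; apply IH.
Qed.

Lemma fmin_le_fmax a : fmin a <= fmax a.
Proof. unfold fmax, fin_list. apply (sortedb_le_last _ _ (fsorted a)). left; reflexivity. Qed.

Lemma Fin_eq a b : fin_list a = fin_list b -> a = b.
Proof.
  destruct a as [i l H], b as [i' l' H']; unfold fin_list; simpl.
  intros E; injection E as -> ->. f_equal. apply UIP_dec, bool_dec.
Qed.

Definition srt (l : list nat) : bool := match l with [] => true | h :: t => sortedb h t end.

Section Blocks.
Variable B : nat -> Fin.
Hypothesis HB : forall m, fmax (B m) < fmin (B (S m)).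

Lemma mono_lt i j : i < j -> fmin (B i) < fmin (B j).
Proof.
  induction j; intros H; [lia|].
  assert (fmin (B j) < fmin (B (S j))) by (pose proof (fmin_le_fmax (B j)); pose proof (HB j); lia).
  destruct (Nat.eq_dec i j); [subst; auto|].
  assert (i < j) by lia. specialize (IHj H1). lia.
Qed.

Lemma mono_le i j : i <= j -> fmin (B i) <= fmin (B j).
Proof. intros H. destruct (Nat.eq_dec i j); [subst; lia|]. apply Nat.lt_le_incl, mono_lt. lia. Qed.

Lemma srt_concat l i : sortedb i l = true ->
  sortedb (fmin (B i)) (frest (B i) ++ concat (map (fun k => fin_list (B k)) l)) = true.
Proof.
  revert i; induction l as [|j l IH]; intros i Hs.
  - simpl. rewrite app_nil_r. apply fsorted.
  - simpl in Hs. apply andb_true_iff in Hs as [H1 H2]. apply Nat.ltb_lt in H1.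
    replace (concat (map (fun k => fin_list (B k)) (j :: l)))
      with (fmin (B j) :: (frest (B j) ++ concat (map (fun k => fin_list (B k)) l))) by reflexivity.
    apply sortedb_app. split; [apply fsorted|]. split; [|apply IH; auto].
    change (fmax (B i) < fmin (B j)).
    pose proof (HB i). pose proof (mono_le (S i) j ltac:(lia)). lia.
Qed.

Lemma Lc_Fin (c : Fin) : exists e : Fin, fin_list e = concat (map (fun k => fin_list (B k)) (fin_list c)).
Proof.
  exists (mkFin _ _ (srt_concat (frest c) (fmin c) (fsorted c))). reflexivity.
Qed.

Lemma srt_tail i r : sortedb i r = true -> srt r = true.
Proof. destruct r; simpl; [auto|]. intros H; apply andb_true_iff in H; tauto. Qed.

Lemma Lc_inj l1 l2 : srt l1 = true -> srt l2 = true ->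
  concat (map (fun k => fin_list (B k)) l1) = concat (map (fun k => fin_list (B k)) l2) -> l1 = l2.
Proof.
  revert l2; induction l1 as [|i r IH]; intros l2 H1 H2 H.
  - destruct l2 as [|i' r']; [reflexivity|]. simpl in H. unfold fin_list in H. simpl in H. discriminate.
  - destruct l2 as [|i' r']; [simpl in H; unfold fin_list in H; simpl in H; discriminate|].
    simpl in H. pose proof H as H'. unfold fin_list in H'. simpl in H'. injection H' as Hh _.
    assert (i = i').
    { destruct (lt_eq_lt_dec i i') as [[Hl|Hl]|Hl]; auto.
      - pose proof (mono_lt _ _ Hl); lia.
      - pose proof (mono_lt _ _ Hl); lia. }
    subst i'. injection H as H. apply app_inv_head_iff in H. f_equal.
    apply IH; auto; [apply (srt_tail i); exact H1 | apply (srt_tail i); exact H2].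
Qed.
End Blocks.

Lemma concat_map_concat (f : nat -> list nat) (g : nat -> list nat) l :
  concat (map f (concat (map g l))) = concat (map (fun k => concat (map f (g k))) l).
Proof. induction l; simpl; [reflexivity|]. rewrite map_app, concat_app, IHl; reflexivity. Qed.

Lemma PS_FP x (B : nat -> Fin) y : (forall m, fmax (B m) < fmin (B (S m))) ->
  (forall m, y m = prodF x (B m)) -> forall w, FP y w -> FP x w.
Proof.
  intros HB Hy w [c ->].
  destruct (Lc_Fin B HB c) as [e He]. exists e. apply wl_inj.
  rewrite !wl_prodF, He, concat_map_concat. f_equal. apply map_ext. intros k.
  rewrite Hy, wl_prodF. reflexivity.
Qed.

Lemma wl_prodF_x (x : nat -> FreeSg) (bl : nat -> Fin) : (forall i, wl (x i) = fin_list (bl i)) ->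
  forall d, wl (prodF x d) = concat (map (fun k => fin_list (bl k)) (fin_list d)).
Proof. intros H d. rewrite wl_prodF. f_equal. apply map_ext. auto. Qed.

Lemma prodS_app x i l j m : prodS x i (l ++ j :: m) = mulS (prodS x i l) (prodS x j m).
Proof.
  apply wl_inj. rewrite wl_mul, !wl_prodS. rewrite app_comm_cons, map_app, concat_app. reflexivity.
Qed.

Fixpoint E (i : nat) (l : list nat) : nat :=
  match l with [] => 1 | j :: l' => (if j =? S i then 0 else 1) + E j l' end.

Lemma E_app i l j m :
  E i (l ++ j :: m) + (if j =? S (last (i :: l) 0) then 1 else 0) = E i l + E j m.
Proof.
  revert i; induction l as [|k l IH]; intros i.
  - simpl. destruct (j =? S i); simpl; lia.
  - assert (last (i :: k :: l) 0 = last (k :: l) 0) as -> by reflexivity.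
    change (E i ((k :: l) ++ j :: m)) with ((if k =? S i then 0 else 1) + E k (l ++ j :: m)).
    change (E i (k :: l)) with ((if k =? S i then 0 else 1) + E k l).
    specialize (IH k). destruct (k =? S i); lia.
Qed.

Definition Ecount (d : Fin) := E (fmin d) (frest d).

Lemma combine x (d d' : Fin) : fmax d < fmin d' ->
  exists e, prodF x e = mulS (prodF x d) (prodF x d') /\
    Ecount e + (if fmin d' =? S (fmax d) then 1 else 0) = Ecount d + Ecount d'.
Proof.
  intros H.
  assert (Hs : sortedb (fmin d) (frest d ++ fmin d' :: frest d') = true).
  { apply sortedb_app. split; [apply fsorted|]. split; [exact H|apply fsorted]. }
  exists (mkFin _ _ Hs). split.
  - unfold prodF; simpl. apply prodS_app.
  - unfold Ecount; simpl. apply E_app.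
Qed.

Lemma ev_true a : Nat.even a = true -> exists k, a = 2 * k.
Proof. intros H; apply Nat.even_spec in H; destruct H as [k Hk]; exists k; lia. Qed.

Lemma ev_false a : Nat.even a = false -> exists k, a = 2 * k + 1.
Proof.
  intros H. assert (Nat.odd a = true) by (rewrite <- Nat.negb_even, H; reflexivity).
  apply Nat.odd_spec in H0; destruct H0 as [k Hk]; exists k; lia.
Qed.

Lemma fS_inj a b : prodF gen a = prodF gen b -> a = b.
Proof. intros H. apply Fin_eq. rewrite <- !wl_prodF_gen, H. reflexivity. Qed.

Lemma PS_gen (x : nat -> FreeSg) (bl : nat -> Fin) : (forall n, x n = prodF gen (bl n)) -> forall i, wl (x i) = fin_list (bl i).
Proof. intros H i. rewrite H. apply wl_prodF_gen. Qed.

Lemma FP_gen_iff (x : nat -> FreeSg) (bl : nat -> Fin) : (forall i, wl (x i) = fin_list (bl i)) -> forall (c d : Fin),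
  prodF gen c = prodF x d <-> fin_list c = concat (map (fun k => fin_list (bl k)) (fin_list d)).
Proof.
  intros Hw c d. split; intros H.
  - transitivity (wl (prodF gen c)); [symmetry; apply wl_prodF_gen|].
    rewrite H. apply wl_prodF_x; auto.
  - apply wl_inj. rewrite wl_prodF_gen, H. symmetry. apply wl_prodF_x; auto.
Qed.

Lemma part1 p : very_strongly_productive p -> mult_iso_ordered_union p.
Proof.
  intros [[Ht [Hf [Hup [Hint Hcomp]]]] Hvs].
  destruct (Hvs (fun _ => True) Ht) as [x0 [[bl0 [Hbl0 Hx0]] [HFP0 _]]].
  assert (Him : p (fun w => exists a, w = prodF gen a)).
  { apply (Hup _ _ HFP0). intros w [d ->].
    destruct (Lc_Fin bl0 Hbl0 d) as [e He]. exists e. symmetry.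
    apply (FP_gen_iff x0 bl0 (PS_gen _ _ Hx0)). exact He. }
  exists gen. split; [exact fS_inj|]. split.
  - repeat split.
    + exists (fun _ => True). split; [exact Ht| tauto].
    + intros [A [HA HAe]]. apply Hf. apply (Hup _ _ (Hint _ _ HA Him)).
      intros z [Hz [a ->]]. exact (proj2 (HAe a) Hz).
    + intros A B [A' [HA' HAe]] HAB.
      exists (fun z => A' z \/ exists b, B b /\ z = prodF gen b). split.
      * apply (Hup _ _ HA'). intros; left; auto.
      * intros a; split; [intros; right; eauto|].
        intros [H|[b [Hb Hab]]]; [apply HAB, HAe, H|].
        apply fS_inj in Hab; subst; auto.
    + intros A B [A' [HA' HAe]] [B' [HB' HBe]].
      exists (fun z => A' z /\ B' z). split; [apply Hint; auto|].
      intros a; rewrite HAe, HBe; tauto.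
    + intros B. destruct (Hcomp (fun z => exists b, B b /\ z = prodF gen b)) as [H|H]; [left|right];
        eexists; (split; [exact H|]); intros a; split.
      * intros; eauto.
      * intros [b [Hb Hab]]. apply fS_inj in Hab; subst; auto.
      * intros Hn [b [Hb Hab]]. apply fS_inj in Hab; subst; auto.
      * intros Hn Hb. apply Hn. eauto.
  - intros A [A' [HA' HAe]]. destruct (Hvs A' HA') as [x [[bl [Hbl Hx]] [HFP Hsub]]].
    pose proof (PS_gen _ _ Hx) as Hw.
    exists bl. split; [exact Hbl|]. split.
    + exists (FP x). split; [exact HFP|]. intros c. split.
      * intros [d Hd]. exists d. apply (FP_gen_iff x bl Hw). exact Hd.
      * intros [d Hd]. exists d. apply (FP_gen_iff x bl Hw). exact Hd.
    + intros c [d Hd]. apply HAe. apply Hsub. exists d. apply (FP_gen_iff x bl Hw). exact Hd.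
Qed.

Lemma order_lemma (x : nat -> FreeSg) (bl : nat -> Fin) (z : nat -> FreeSg) (bl2 : nat -> Fin) (d : nat -> Fin) :
  (forall m, fmax (bl m) < fmin (bl (S m))) ->
  (forall i, wl (x i) = fin_list (bl i)) ->
  (forall m, fmax (bl2 m) < fmin (bl2 (S m))) ->
  (forall n, z n = prodF gen (bl2 n)) ->
  (forall n, z n = prodF x (d n)) ->
  forall n, fmax (d n) < fmin (d (S n)).
Proof.
  intros Hbl Hwx Hbl2 Hz Hzd n.
  assert (H1 : In (fmin (bl (fmax (d n)))) (wl (z n))).
  { rewrite Hzd, wl_prodF. apply in_concat. exists (wl (x (fmax (d n)))). split.
    - apply (in_map (fun k => wl (x k))). apply In_last.
    - rewrite Hwx. left; reflexivity. }
  assert (H2 : fmin (bl (fmax (d n))) <= fmax (bl2 n)).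
  { rewrite Hz, wl_prodF_gen in H1. exact (sortedb_le_last _ _ (fsorted (bl2 n)) _ H1). }
  pose proof (Hbl2 n) as H3.
  assert (E1 : fin_list (bl2 (S n)) = fin_list (bl (fmin (d (S n)))) ++
                 concat (map (fun k => wl (x k)) (frest (d (S n))))).
  { rewrite <- Hwx. transitivity (wl (z (S n))); [rewrite Hz, wl_prodF_gen; reflexivity|].
    rewrite Hzd, wl_prodF. reflexivity. }
  unfold fin_list in E1. simpl in E1. injection E1 as E2 _.
  destruct (le_lt_dec (fmin (d (S n))) (fmax (d n))) as [Hl|Hl]; [|exact Hl].
  pose proof (mono_le bl Hbl _ _ Hl). lia.
Qed.

Lemma setup p (x : nat -> FreeSg) (bl : nat -> Fin) C :
  very_strongly_productive p ->
  (forall m, fmax (bl m) < fmin (bl (S m))) ->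
  (forall i, wl (x i) = fin_list (bl i)) ->
  p (FP x) -> p C ->
  exists (z : nat -> FreeSg) (d : nat -> Fin),
    p (FP z) /\ (forall w, FP z w -> C w) /\ (forall n, z n = prodF x (d n)) /\
    (forall n, fmax (d n) < fmin (d (S n))).
Proof.
  intros [[Ht [Hf [Hup [Hint Hcomp]]]] Hvs] Hbl Hwx HFPx HC.
  destruct (Hvs (fun w => FP x w /\ C w) (Hint _ _ HFPx HC)) as [z [[bl2 [Hbl2 Hz]] [HFPz Hsubz]]].
  assert (Hzx : forall n, exists dd, z n = prodF x dd).
  { intro n. destruct (Hsubz (z n)) as [[dd Hdd] _]; [exists (mkFin n [] eq_refl); reflexivity|].
    exists dd; exact Hdd. }
  exists z, (fun n => proj1_sig (constructive_indefinite_description _ (Hzx n))).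
  assert (Hzd : forall n, z n = prodF x (proj1_sig (constructive_indefinite_description _ (Hzx n))))
    by (intro n; exact (proj2_sig (constructive_indefinite_description _ (Hzx n)))).
  split; [exact HFPz|]. split; [intros w Hw; apply Hsubz; exact Hw|]. split; [exact Hzd|].
  apply (order_lemma x bl z bl2); auto.
Qed.

Lemma build p (A : FreeSg -> Prop) (x z : nat -> FreeSg) (d : nat -> Fin) :
  (forall A B : FreeSg -> Prop, p A -> (forall z, A z -> B z) -> p B) ->
  (forall w, FP x w -> A w) ->
  p (FP z) -> (forall n, z n = prodF x (d n)) ->
  (forall n, S (fmax (d n)) < fmin (d (S n))) ->
  exists (x' : nat -> FreeSg) (k : nat -> nat),
    (forall n, k n < k (S n)) /\
    p (FP (fun n => x' (k n))) /\
    subset (FP x') A /\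
    (forall m, exists n, m <= n /\ forall i, k i <> n).
Proof.
  intros Hup HsubA HFPz Hzd Hgap.
  set (B := fun m => if Nat.even m then d (Nat.div2 m)
                     else mkFin (S (fmax (d (Nat.div2 m)))) [] eq_refl).
  assert (Be : forall n, B (2 * n) = d n).
  { intro n. unfold B. rewrite Nat.even_even, Nat.div2_double. reflexivity. }
  assert (Bo : forall n, B (S (2 * n)) = mkFin (S (fmax (d n))) [] eq_refl).
  { intro n. unfold B. rewrite Nat.div2_succ_double.
    assert (Nat.even (S (2 * n)) = false) as ->.
    { rewrite Nat.even_succ, <- Nat.negb_even, Nat.even_even. reflexivity. }
    reflexivity. }
  assert (HB : forall m, fmax (B m) < fmin (B (S m))).
  { intro m. destruct (Nat.Even_or_Odd m) as [[n ->]|[n ->]].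
    - rewrite Be. replace (S (2 * n)) with (S (2 * n)) by reflexivity. rewrite Bo.
      simpl. lia.
    - replace (2 * n + 1) with (S (2 * n)) by lia. rewrite Bo.
      replace (S (S (2 * n))) with (2 * S n) by lia. rewrite Be.
      simpl. apply Hgap. }
  exists (fun m => prodF x (B m)), (fun n => 2 * n). split; [intros; lia|]. split.
  - apply (Hup _ _ HFPz). apply FP_ext. intro n. rewrite Be. apply Hzd.
  - split.
    + intros w Hw. apply HsubA. apply (PS_FP x B (fun m => prodF x (B m)) HB); auto.
    + intro m. exists (S (2 * m)). split; [lia|]. intros i; lia.
Qed.

Lemma par1 a b c : Nat.even a = true -> Nat.even b = true -> Nat.even c = true -> a + 1 = b + c -> False.
Proof.
  intros Ha Hb Hc H. apply ev_true in Ha as [i ?], Hb as [j ?], Hc as [k ?]. lia.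
Qed.

Lemma par2 a b c : Nat.even a = false -> Nat.even b = false -> Nat.even c = false -> a + 0 = b + c -> False.
Proof.
  intros Ha Hb Hc H. apply ev_false in Ha as [i ?], Hb as [j ?], Hc as [k ?]. lia.
Qed.

Lemma part2 p : very_strongly_productive p -> sparse p.
Proof.
  intros Hp A HA. pose proof Hp as [[Ht [Hf [Hup [Hint Hcomp]]]] Hvs].
  destruct (Hvs A HA) as [x [[bl [Hbl Hx]] [HFPx HsubA]]].
  pose proof (PS_gen _ _ Hx) as Hwx.
  assert (uniq : forall e e', prodF x e = prodF x e' -> e = e').
  { intros e e' H. apply Fin_eq. apply (Lc_inj bl Hbl); [apply fsorted|apply fsorted|].
    rewrite <- !(wl_prodF_x x bl Hwx). rewrite H. reflexivity. }
  set (Ev := fun w => exists d, w = prodF x d /\ Nat.even (Ecount d) = true).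
  destruct (Hcomp Ev) as [HC|HC].
  - destruct (setup p x bl Ev Hp Hbl Hwx HFPx HC) as [z [d [HFPz [Hsub [Hzd Hord]]]]].
    apply (build p A x z d Hup HsubA HFPz Hzd). intro n.
    assert (Hev : forall n, Nat.even (Ecount (d n)) = true).
    { intro m. destruct (Hsub (z m)) as [d' [Hd' He]]; [exists (mkFin m [] eq_refl); reflexivity|].
      rewrite Hzd in Hd'. apply uniq in Hd'. subst; auto. }
    destruct (combine x (d n) (d (S n)) (Hord n)) as [e [He1 He2]].
    assert (Hs : sortedb n [S n] = true) by (simpl; rewrite andb_true_r; apply Nat.ltb_lt; lia).
    destruct (Hsub (mulS (z n) (z (S n)))) as [e' [He' Hee]]; [exists (mkFin n [S n] Hs); reflexivity|].
    rewrite !Hzd, <- He1 in He'. apply uniq in He'. subst e'.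
    revert He2. destruct (fmin (d (S n)) =? S (fmax (d n))) eqn:Heq; intros He2.
    + exfalso. exact (par1 _ _ _ Hee (Hev n) (Hev (S n)) He2).
    + apply Nat.eqb_neq in Heq. pose proof (Hord n). lia.
  - exfalso.
    destruct (setup p x bl _ Hp Hbl Hwx HFPx HC) as [z [d [HFPz [Hsub [Hzd Hord]]]]].
    assert (Hod : forall n, Nat.even (Ecount (d n)) = false).
    { intro m. destruct (Nat.even (Ecount (d m))) eqn:H; [|reflexivity]. exfalso.
      apply (Hsub (z m)); [exists (mkFin m [] eq_refl); reflexivity|].
      exists (d m); auto. }
    assert (H02 : fmax (d 0) < fmin (d 2)).
    { pose proof (Hord 0); pose proof (Hord 1); pose proof (fmin_le_fmax (d 1)). lia. }
    destruct (combine x (d 0) (d 2) H02) as [e [He1 He2]].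
    apply (Hsub (mulS (z 0) (z 2))); [exists (mkFin 0 [2] eq_refl); reflexivity|].
    exists e. split; [rewrite !Hzd; symmetry; exact He1|].
    revert He2. destruct (fmin (d 2) =? S (fmax (d 0))) eqn:Heq; intros He2.
    + apply Nat.eqb_eq in Heq. pose proof (Hord 0); pose proof (Hord 1); pose proof (fmin_le_fmax (d 1)). lia.
    + destruct (Nat.even (Ecount e)) eqn:Hee; [reflexivity|].
      exfalso. exact (par2 _ _ _ Hee (Hod 0) (Hod 2) He2).
Qed.

Theorem mainTheorem17 :
  forall p : (FreeSg -> Prop) -> Prop,
    very_strongly_productive p ->
    mult_iso_ordered_union p /\ sparse p.
Proof.
  intros p Hp. split; [apply part1 | apply part2]; exact Hp.
Qed.
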